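(* For all programs $P,P',S,Q$: if $P\sqsubseteq P'$ and the operational triple $\{|P'|\}\ S\ \{|Q|\}$ holds, then $\{|P|\}\ S\ \{|Q|\}$ holds.
   Context: Programs are statements of a sequential imperative language with a standard small-step operational semantics over program states. $\mathrm{behs}(P)$ is the set of pairs (initial state, final state) of finite terminating executions of $P$; $(s,u)\in\mathrm{behs}(P;Q)$ iff there is $t$ with $(s,t)\in\mathrm{behs}(P)$ and $(t,u)\in\mathrm{behs}(Q)$. The post-state set is $\mathrm{pst}(P)=\{t:\exists s,\ (s,t)\in\mathrm{behs}(P)\}$. Program ordering: $P\sqsubseteq Q$ iff $\mathrm{pst}(P)\subseteq\mathrm{pst}(Q)$. The operational triple $\{|P|\}\ S\ \{|Q|\}$ is defined to mean $\mathrm{pst}(P;S)\subseteq\mathrm{pst}(Q)$. *)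

(* Defs.v *)
From Stdlib Require Import ZArith Relations.

Definition var := nat.
Definition state := var -> Z.

Inductive aexp : Type :=
| ANum : Z -> aexp
| AVar : var -> aexp
| APlus : aexp -> aexp -> aexp
| AMinus : aexp -> aexp -> aexp
| AMult : aexp -> aexp -> aexp.

Inductive bexp : Type :=
| BTrue : bexp
| BFalse : bexp
| BEq : aexp -> aexp -> bexp
| BLe : aexp -> aexp -> bexp
| BNot : bexp -> bexp
| BAnd : bexp -> bexp -> bexp.

Fixpoint aeval (s : state) (a : aexp) : Z :=
  match a with
  | ANum n => n
  | AVar x => s x
  | APlus a1 a2 => (aeval s a1 + aeval s a2)%Z
  | AMinus a1 a2 => (aeval s a1 - aeval s a2)%Z
  | AMult a1 a2 => (aeval s a1 * aeval s a2)%Z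
  end.

Fixpoint beval (s : state) (b : bexp) : bool :=
  match b with
  | BTrue => true
  | BFalse => false
  | BEq a1 a2 => Z.eqb (aeval s a1) (aeval s a2)
  | BLe a1 a2 => Z.leb (aeval s a1) (aeval s a2)
  | BNot b1 => negb (beval s b1)
  | BAnd b1 b2 => andb (beval s b1) (beval s b2)
  end.

Inductive stmt : Type :=
| Skip : stmt
| Assign : var -> aexp -> stmt
| Seq : stmt -> stmt -> stmt
| If : bexp -> stmt -> stmt -> stmt
| While : bexp -> stmt -> stmt.

Definition update (s : state) (x : var) (v : Z) : state :=
  fun y => if Nat.eqb x y then v else s y.

Inductive step : stmt * state -> stmt * state -> Prop :=
| S_Assign : forall x a s, step (Assign x a, s) (Skip, update s x (aeval s a))
| S_SeqSkip : forall c s, step (Seq Skip c, s) (c, s)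
| S_Seq : forall c1 c1' c2 s s', step (c1, s) (c1', s') ->
    step (Seq c1 c2, s) (Seq c1' c2, s')
| S_IfTrue : forall b c1 c2 s, beval s b = true -> step (If b c1 c2, s) (c1, s)
| S_IfFalse : forall b c1 c2 s, beval s b = false -> step (If b c1 c2, s) (c2, s)
| S_While : forall b c s,
    step (While b c, s) (If b (Seq c (While b c)) Skip, s).

Definition steps := clos_refl_trans (stmt * state) step.

Definition behs (P : stmt) (s t : state) : Prop := steps (P, s) (Skip, t).

Definition pst (P : stmt) (t : state) : Prop := exists s, behs P s t.

Definition prog_le (P Q : stmt) : Prop := forall t, pst P t -> pst Q t.

Definition op_triple (P S Q : stmt) : Prop := forall t, pst (Seq P S) t -> pst Q t.

(* Main.v *)
Require Import Defs.
From Stdlib Require Import Relations.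

Lemma lift_seq : forall x y, steps x y -> forall c2,
  steps (Seq (fst x) c2, snd x) (Seq (fst y) c2, snd y).
Proof.
  intros x y H; induction H; intros c2.
  - destruct x as [a b], y as [c d]; apply rt_step; simpl; constructor; auto.
  - apply rt_refl.
  - eapply rt_trans; [apply IHclos_refl_trans1 | apply IHclos_refl_trans2].
Qed.

Lemma decomp : forall x y, clos_refl_trans_1n _ step x y ->
  forall c1 c2 s u, x = (Seq c1 c2, s) -> y = (Skip, u) ->
  exists t, steps (c1, s) (Skip, t) /\ steps (c2, t) (Skip, u).
Proof.
  intros x y H; induction H; intros c1 c2 s u Ex Ey.
  - subst; discriminate.
  - subst. inversion H; subst.
    + exists s. split. apply rt_refl. apply clos_rt1n_rt; auto.
    + destruct (IHclos_refl_trans_1n c1' c2 s' u eq_refl eq_refl) as [t [H1 H2]].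
      exists t; split; auto. eapply rt_trans; [apply rt_step; eauto | auto].
Qed.

Theorem proposition6 : forall P P' S Q : stmt,
  prog_le P P' -> op_triple P' S Q -> op_triple P S Q.
Proof.
  intros P P' S Q Hle Ht u [s Hs].
  unfold behs, steps in Hs. apply clos_rt_rt1n in Hs.
  destruct (decomp _ _ Hs P S s u eq_refl eq_refl) as [t [H1 H2]].
  destruct (Hle t (ex_intro _ s H1)) as [s' Hs'].
  apply Ht. exists s'. unfold behs, steps.
  eapply rt_trans.
  - apply (lift_seq (P', s') (Skip, t) Hs' S).
  - simpl. eapply rt_trans; [apply rt_step; constructor | exact H2].
Qed.
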